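(* For every positive integer $k$, any deterministic distributed algorithm in the LOCAL model that finds a proper $3$-coloring of $G_k$ (for every assignment of unique identifiers to its vertices) requires at least $k=\frac{1}{6}(|V(G_k)|-2)$ rounds.
   Context: The outerplanar graphs $G_k$ are defined inductively. $G_0$ has vertex set $\{v_0,u_0\}$ and the single edge $\{v_0,u_0\}$. For $i\ge 1$, $G_i$ is obtained from $G_{i-1}$ by adding six new vertices $a_i,b_i,c_i,d_i,v_i,u_i$ and the edges $\{a_i,b_i\},\{c_i,d_i\},\{a_i,v_i\},\{b_i,v_i\},\{c_i,u_i\},\{d_i,u_i\},\{a_i,v_{i-1}\},\{b_i,v_{i-1}\},\{c_i,u_{i-1}\},\{d_i,u_{i-1}\}$. LOCAL model: the network is the graph, each vertex has a unique identifier, and in synchronous rounds each vertex receives the previous round's messages, computes arbitrarily and sends messages of unbounded size to its neighbors; at the end each vertex outputs its color. A proper $3$-coloring assigns colors in $\{1,2,3\}$ with adjacent vertices colored differently. *)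

(* Defs.v *)
From mathcomp Require Import all_boot.
Set Implicit Arguments. Unset Strict Implicit. Unset Printing Implicit Defensive.

(* Vertices of G_k are 'I_(6*k+2), encoded as follows:
     v_i = 6 i,  u_i = 6 i + 1            (0 <= i <= k)
     a_i = 6 i - 4, b_i = 6 i - 3, c_i = 6 i - 2, d_i = 6 i - 1   (1 <= i <= k) *)
Definition vtx_v (i : nat) : nat := 6 * i.
Definition vtx_u (i : nat) : nat := 6 * i + 1.
Definition vtx_a (i : nat) : nat := 6 * i - 4.
Definition vtx_b (i : nat) : nat := 6 * i - 3.
Definition vtx_c (i : nat) : nat := 6 * i - 2.
Definition vtx_d (i : nat) : nat := 6 * i - 1.

Definition edges_at (i : nat) : seq (nat * nat) :=
  [:: (vtx_a i, vtx_b i); (vtx_c i, vtx_d i);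
      (vtx_a i, vtx_v i); (vtx_b i, vtx_v i);
      (vtx_c i, vtx_u i); (vtx_d i, vtx_u i);
      (vtx_a i, vtx_v i.-1); (vtx_b i, vtx_v i.-1);
      (vtx_c i, vtx_u i.-1); (vtx_d i, vtx_u i.-1)].

Definition Gk_edges (k : nat) : seq (nat * nat) :=
  (vtx_v 0, vtx_u 0) :: flatten [seq edges_at i | i <- iota 1 k].

Definition Gk_vertex (k : nat) : finType := 'I_(6 * k + 2).

Definition Gk_adj (k : nat) : rel (Gk_vertex k) :=
  fun x y => (((x : nat), (y : nat)) \in Gk_edges k)
          || (((y : nat), (x : nat)) \in Gk_edges k).

(* An algorithm with state type S
   consists of
     init : ID -> degree -> S        initial local knowledge,
     step : S -> (nat -> option S) -> S
            new state from own state and the messages of the previous round;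
            the second argument maps the identifier j of a neighbour to the
            message (its whole state, which is w.l.o.g. since messages are
            unbounded) sent by that neighbour, and to None if no neighbour
            has identifier j,
     out  : S -> 'I_3                 the output colour (color c+1 for c : 'I_3). *)

Section Local.
Variables (V : finType) (adj : rel V) (S : Type).

Definition degree (v : V) : nat := #|[set w | adj v w]|.

Definition inbox (id : V -> nat) (st : V -> S) (v : V) : nat -> option S :=
  fun j => omap st [pick w | adj v w && (id w == j)].

Fixpoint local_state (init : nat -> nat -> S) (step : S -> (nat -> option S) -> S)
    (id : V -> nat) (t : nat) : V -> S :=
  match t with
  | 0 => fun v => init (id v) (degree v)
  | t'.+1 => let st := local_state init step id t' in
             fun v => step (st v) (inbox id st v)
  end.

Definition local_output (init : nat -> nat -> S) (step : S -> (nat -> option S) -> S)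
    (out : S -> 'I_3) (id : V -> nat) (r : nat) (v : V) : 'I_3 :=
  out (local_state init step id r v).

End Local.

Definition proper_coloring (V : finType) (adj : rel V) (col : V -> 'I_3) : Prop :=
  forall x y, adj x y -> col x != col y.

(* Main.v *)
Require Import Defs.
From mathcomp Require Import all_boot zify.
From Stdlib Require Import FunctionalExtensionality.
Set Implicit Arguments. Unset Strict Implicit. Unset Printing Implicit Defensive.

Section Transfer.
Variables (V : finType) (adj : rel V) (S : Type).
Variables (init : nat -> nat -> S) (step : S -> (nat -> option S) -> S).

Fixpoint near (t : nat) (x w : V) : Prop :=
  match t with
  | 0 => w = x
  | t'.+1 => w = x \/ exists y, adj x y /\ near t' y w
  end.

Lemma near_refl t x : near t x x.
Proof. by case: t => [|t] /=; [|left]. Qed.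

Lemma near_S t x w : near t x w -> near t.+1 x w.
Proof.
elim: t x => [|t IH] x /=; first by move=> ->; left.
case=> [->|[y [hy hn]]]; first by left.
right; exists y; split=> //; exact: IH.
Qed.

Lemma transfer (id1 id2 : V -> nat) (phi psi : V -> V)
  (phiK : cancel phi psi) (psiK : cancel psi phi)
  (hadj : forall x y, adj (phi x) (phi y) = adj x y)
  (inj1 : injective id1) (inj2 : injective id2) t x :
  (forall w, near t x w -> id2 (phi w) = id1 w) ->
  local_state adj init step id1 t x = local_state adj init step id2 t (phi x).
Proof.
elim: t x => [|t IH] x H /=.
  rewrite H //; f_equal.
  rewrite /degree.
  have e : [set w | adj (phi x) w] = phi @: [set w | adj x w].
    apply/setP => w; rewrite inE; apply/idP/imsetP.
      move=> h; exists (psi w); last by rewrite psiK.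
      by rewrite inE -(hadj x) psiK.
    by case=> w'; rewrite inE => h ->; rewrite hadj.
  by rewrite e card_imset //; exact: can_inj phiK.
f_equal.
  by apply: IH => w hw; apply: H; apply: near_S.
apply: functional_extensionality => j.
rewrite /inbox.
case: pickP => [w /andP [hw /eqP hj]|h0].
  have Hw : id2 (phi w) = id1 w.
    by apply: H; right; exists w; split=> //; apply: near_refl.
  case: pickP => [w' /andP [hw' /eqP hj']|h1] /=.
    have ew : w' = phi w by apply: inj2; rewrite hj' Hw.
    subst w'; f_equal; apply: IH => w'' hn; apply: H; right; exists w; split=> //.
  by move: (h1 (phi w)); rewrite hadj hw Hw hj eqxx.
case: pickP => [w' /andP [hw' /eqP hj']|h1] //=.
have hn : adj x (psi w') by rewrite -(hadj x) psiK.
have Hw : id2 (phi (psi w')) = id1 (psi w').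
  by apply: H; right; exists (psi w'); split=> //; apply: near_refl.
by move: (h0 (psi w')); rewrite hn -Hw psiK hj' eqxx.
Qed.
End Transfer.

Definition E (i x y : nat) : Prop :=
  (x = 6*i-4 /\ y = 6*i-3) \/ (x = 6*i-2 /\ y = 6*i-1) \/
  (x = 6*i-4 /\ y = 6*i) \/ (x = 6*i-3 /\ y = 6*i) \/
  (x = 6*i-2 /\ y = 6*i+1) \/ (x = 6*i-1 /\ y = 6*i+1) \/
  (x = 6*i-4 /\ y = 6*i.-1) \/ (x = 6*i-3 /\ y = 6*i.-1) \/
  (x = 6*i-2 /\ y = 6*i.-1+1) \/ (x = 6*i-1 /\ y = 6*i.-1+1).

Lemma edges_atE i x y : (x, y) \in edges_at i -> E i x y.
Proof.
rewrite /edges_at /vtx_a /vtx_b /vtx_c /vtx_d /vtx_v /vtx_u !inE !xpair_eqE /E.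
move=> h.
repeat (case/orP: h => [/andP [/eqP -> /eqP ->]|h]; [tauto|]).
case/andP: h => /eqP -> /eqP ->; tauto.
Qed.

Definition vs (x : nat) : Prop := x %% 6 = 0 \/ x %% 6 = 2 \/ x %% 6 = 3.
Definition vsb (x : nat) : bool := (x %% 6 == 0) || (x %% 6 == 2) || (x %% 6 == 3).
Lemma vsbP x : reflect (vs x) (vsb x).
Proof. rewrite /vsb /vs; apply: (iffP idP); lia. Qed.

Definition sg (x : nat) : nat :=
  match x %% 6 with 0 => x + 1 | 1 => x - 1 | 2 => x + 2 | 3 => x + 2 | _ => x - 2 end.

Lemma sgP x : (x %% 6 = 0 /\ sg x = x + 1) \/ (x %% 6 = 1 /\ sg x = x - 1) \/
  (x %% 6 = 2 /\ sg x = x + 2) \/ (x %% 6 = 3 /\ sg x = x + 2) \/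
  (x %% 6 = 4 /\ sg x = x - 2) \/ (x %% 6 = 5 /\ sg x = x - 2).
Proof.
rewrite /sg; have : x %% 6 < 6 by rewrite ltn_pmod.
case: (x %% 6) => [|[|[|[|[|[|n]]]]]] //= _; tauto.
Qed.

Lemma sgK x : sg (sg x) = x.
Proof. have := sgP x; have := sgP (sg x); lia. Qed.

Lemma sg_vs x : vs (sg x) <-> ~ vs x.
Proof. have := sgP x; rewrite /vs; lia. Qed.

Lemma sg_v i : sg (6*i) = 6*i+1. Proof. have := sgP (6*i); lia. Qed.
Lemma sg_u i : sg (6*i+1) = 6*i. Proof. have := sgP (6*i+1); lia. Qed.
Lemma sg_a i : 0 < i -> sg (6*i-4) = 6*i-2. Proof. have := sgP (6*i-4); lia. Qed.
Lemma sg_b i : 0 < i -> sg (6*i-3) = 6*i-1. Proof. have := sgP (6*i-3); lia. Qed.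
Lemma sg_c i : 0 < i -> sg (6*i-2) = 6*i-4. Proof. have := sgP (6*i-2); lia. Qed.
Lemma sg_d i : 0 < i -> sg (6*i-1) = 6*i-3. Proof. have := sgP (6*i-1); lia. Qed.

Lemma edges_at_sg i x y : 0 < i -> (x, y) \in edges_at i -> (sg x, sg y) \in edges_at i.
Proof.
move=> hi /edges_atE.
rewrite /E /edges_at /vtx_a /vtx_b /vtx_c /vtx_d /vtx_v /vtx_u.
move=> h.
do 9 (case: h => [[-> ->]|h]; [rewrite ?(sg_a hi) ?(sg_b hi) ?(sg_c hi) ?(sg_d hi) ?sg_v ?sg_u !inE eqxx ?orbT //|]).
case: h => -> ->; rewrite ?(sg_a hi) ?(sg_b hi) ?(sg_c hi) ?(sg_d hi) ?sg_v ?sg_u !inE eqxx ?orbT //.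
Qed.
Lemma Gk_edgesE k x y : (x, y) \in Gk_edges k ->
  (x = 0 /\ y = 1) \/ exists i, 0 < i <= k /\ E i x y.
Proof.
rewrite /Gk_edges in_cons xpair_eqE /vtx_v /vtx_u => /orP [/andP [/eqP -> /eqP ->]|].
  by left.
move/flatten_mapP => [i]; rewrite mem_iota => hi /edges_atE he.
right; exists i; split=> //; lia.
Qed.

Lemma Gk_edges_in k i e : 0 < i <= k -> e \in edges_at i -> e \in Gk_edges k.
Proof.
move=> hi he; rewrite /Gk_edges in_cons; apply/orP; right.
apply/flatten_mapP; exists i => //; rewrite mem_iota; lia.
Qed.

Lemma Gk_edges_sg k x y : (x, y) \in Gk_edges k ->
  ((sg x, sg y) \in Gk_edges k) || ((sg y, sg x) \in Gk_edges k).
Proof.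
rewrite {1}/Gk_edges in_cons xpair_eqE /vtx_v /vtx_u => /orP [/andP [/eqP -> /eqP ->]|].
  by rewrite sg_v sg_u /Gk_edges /vtx_v /vtx_u mem_head orbT.
move/flatten_mapP => [i]; rewrite mem_iota => hi he.
apply/orP; left; apply: (Gk_edges_in (i := i)); first lia.
apply: edges_at_sg => //; lia.
Qed.

Lemma Gk_adj_info k (x y : Gk_vertex k) : Gk_adj x y ->
  (x = 0 :> nat /\ y = 1 :> nat) \/ (x = 1 :> nat /\ y = 0 :> nat) \/
  exists i, 0 < i <= k /\ (E i x y \/ E i y x).
Proof.
rewrite /Gk_adj => /orP [/Gk_edgesE|/Gk_edgesE].
  case=> [h|[i [hi he]]]; first by left.
  by right; right; exists i; split=> //; left.
case=> [h|[i [hi he]]]; first by right; left; tauto.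
by right; right; exists i; split=> //; right.
Qed.

Lemma adj_side k (x y : Gk_vertex k) : Gk_adj x y -> vs x -> 0 < x ->
  vs y /\ x <= y + 4.
Proof.
move/Gk_adj_info; rewrite /vs /E.
case=> [|[|[i [hi [h|h]]]]]; lia.
Qed.

Lemma near_side k t (x w : Gk_vertex k) : near (@Gk_adj k) t x w ->
  vs x -> 4 * t < x -> vs w.
Proof.
elim: t x => [|t IH] x /=; first by move=> ->.
case=> [->//|[y [hy hn]]] hx hlt.
have [hy1 hy2] := adj_side hy hx (leq_ltn_trans (leq0n _) hlt).
apply: (IH y hn hy1); lia.
Qed.

Lemma Mpos k : 0 < 6 * k + 2. Proof. by rewrite addn2. Qed.
Definition mk k (n : nat) : Gk_vertex k := Ordinal (ltn_pmod n (Mpos k)).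

Lemma mkE k n : n < 6 * k + 2 -> val (mk k n) = n.
Proof. by move=> h; rewrite /= modn_small. Qed.

Lemma adj_mk k x y : x < 6 * k + 2 -> y < 6 * k + 2 ->
  (x, y) \in Gk_edges k -> Gk_adj (mk k x) (mk k y).
Proof. by move=> hx hy he; rewrite /Gk_adj !mkE // he. Qed.

Lemma three (a b c d : 'I_3) : a != b -> a != c -> b != c -> d != b -> d != c -> d = a.
Proof.
case: a b c d => [a ha] [b hb] [c hc] [d hd]; rewrite -!val_eqE /= => *; apply/val_inj => /=. lia.
Qed.

Lemma four (a b c d : 'I_3) : a != b -> a != c -> a != d -> b != c -> b != d -> c != d -> False.
Proof.
case: a b c d => [a ha] [b hb] [c hc] [d hd]; rewrite -!val_eqE /= => *. lia.
Qed.

Lemma col_chain k (col : Gk_vertex k -> 'I_3) : proper_coloring (@Gk_adj k) col ->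
  col (mk k (6 * k)) != col (mk k (6 * k + 1)).
Proof.
move=> hp.
have hv : forall i, i <= k -> col (mk k (6 * i)) = col (mk k 0).
  elim=> [|i IH] hi; first by [].
  rewrite -IH; last lia.
  have hi' : 0 < i.+1 <= k by lia.
  have ed : forall x y, (x, y) \in edges_at i.+1 -> Gk_adj (mk k x) (mk k y).
    move=> x y he; have := Gk_edges_in hi' he => he'.
    have [hx hy] : x < 6 * k + 2 /\ y < 6 * k + 2.
      move/edges_atE: he; rewrite /E; lia.
    exact: adj_mk.
  apply: (three (b := col (mk k (6 * i.+1 - 4))) (c := col (mk k (6 * i.+1 - 3)))).
  - by rewrite eq_sym; apply: hp; apply: ed; rewrite /edges_at !inE eqxx ?orbT.
  - by rewrite eq_sym; apply: hp; apply: ed; rewrite /edges_at !inE eqxx ?orbT.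
  - by apply: hp; apply: ed; rewrite /edges_at !inE eqxx ?orbT.
  - by rewrite eq_sym; apply: hp; apply: ed; rewrite /edges_at !inE eqxx ?orbT.
  - by rewrite eq_sym; apply: hp; apply: ed; rewrite /edges_at !inE eqxx ?orbT.
have hu : forall i, i <= k -> col (mk k (6 * i + 1)) = col (mk k 1).
  elim=> [|i IH] hi; first by [].
  rewrite -IH; last lia.
  have hi' : 0 < i.+1 <= k by lia.
  have ed : forall x y, (x, y) \in edges_at i.+1 -> Gk_adj (mk k x) (mk k y).
    move=> x y he; have := Gk_edges_in hi' he => he'.
    have [hx hy] : x < 6 * k + 2 /\ y < 6 * k + 2.
      move/edges_atE: he; rewrite /E; lia.
    exact: adj_mk.
  apply: (three (b := col (mk k (6 * i.+1 - 2))) (c := col (mk k (6 * i.+1 - 1)))).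
  - by rewrite eq_sym; apply: hp; apply: ed; rewrite /edges_at !inE eqxx ?orbT.
  - by rewrite eq_sym; apply: hp; apply: ed; rewrite /edges_at !inE eqxx ?orbT.
  - by apply: hp; apply: ed; rewrite /edges_at !inE eqxx ?orbT.
  - by rewrite eq_sym; apply: hp; apply: ed; rewrite /edges_at !inE eqxx ?orbT.
  - by rewrite eq_sym; apply: hp; apply: ed; rewrite /edges_at !inE eqxx ?orbT.
rewrite hv // hu //; apply: hp; apply: adj_mk; [lia|lia|].
by rewrite /Gk_edges in_cons; apply/orP; left.
Qed.

Lemma sg_lt k (x : Gk_vertex k) : sg x < 6 * k + 2.
Proof. have := ltn_ord x; have := sgP x; lia. Qed.

Definition Sig k (x : Gk_vertex k) : Gk_vertex k := Ordinal (sg_lt x).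

Lemma SigK k : cancel (@Sig k) (@Sig k).
Proof. by move=> x; apply/val_inj; rewrite /= sgK. Qed.

Lemma Sig_adj1 k (x y : Gk_vertex k) : Gk_adj x y -> Gk_adj (Sig x) (Sig y).
Proof.
rewrite /Gk_adj /= => /orP [] /Gk_edges_sg; by rewrite orbC.
Qed.

Lemma Sig_adj k (x y : Gk_vertex k) : Gk_adj (Sig x) (Sig y) = Gk_adj x y.
Proof.
apply/idP/idP; last exact: Sig_adj1.
by move/Sig_adj1; rewrite !SigK.
Qed.

Definition idpq k (p q : nat) (w : Gk_vertex k) : nat :=
  if vsb w then 4 * w + p else 4 * sg w + q.

Lemma idpq_inj k p q : p < 4 -> q < 4 -> p != q -> injective (@idpq k p q).
Proof.
move=> hp hq hpq x y; rewrite /idpq.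
have e1 := sgK x; have e2 := sgK y.
case: (vsbP x) => hx; case: (vsbP y) => hy => h; apply/val_inj => /=; try lia.
have hs : sg x = sg y by lia.
by rewrite -e1 -e2 hs.
Qed.

Lemma idpq_swap k p q (w : Gk_vertex k) : idpq q p (Sig w) = idpq p q w.
Proof.
rewrite /idpq /= sgK; have := sg_vs w.
by case: (vsbP w) => hw; case: (vsbP (sg w)) => hs; try tauto.
Qed.

Theorem lemma6p9 (k : nat) (hk : 0 < k)
    (S : Type) (init : nat -> nat -> S) (step : S -> (nat -> option S) -> S)
    (out : S -> 'I_3) (r : nat) :
  (forall id : Gk_vertex k -> nat, injective id ->
     proper_coloring (@Gk_adj k)
       (local_output (@Gk_adj k) init step out id r)) ->
  k <= r /\ k = (#|Gk_vertex k| - 2) %/ 6.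
Proof.
move=> H; split; last by rewrite card_ord addnK mulKn.
rewrite leqNgt; apply/negP => hr.
pose vk := mk k (6 * k); pose uk := mk k (6 * k + 1).
pose O p q x := local_output (@Gk_adj k) init step out (@idpq k p q) r x.
have hvk : val vk = 6 * k by rewrite mkE //; lia.
have neq : forall p q, p < 4 -> q < 4 -> p != q -> O p q vk != O q p vk.
  move=> p q hp hq hpq.
  have := col_chain (H _ (idpq_inj hp hq hpq)).
  change (O p q vk != O p q uk -> O p q vk != O q p vk).
  suff -> : O p q uk = O q p vk by [].
  rewrite /O /local_output; congr out.
  have -> : vk = Sig uk by apply/val_inj; rewrite /vk /uk /= !modn_small ?sg_u //; lia.
  apply: (transfer init step (@SigK k) (@SigK k) (@Sig_adj k) (idpq_inj hp hq hpq)).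
    by apply: idpq_inj => //; rewrite eq_sym.
  by move=> w _; rewrite idpq_swap.
have loc : forall p q q', p < 4 -> q < 4 -> q' < 4 -> p != q -> p != q' ->
    O p q vk = O p q' vk.
  move=> p q q' hp hq hq' h1 h2.
  rewrite /O /local_output; congr out.
  apply: (@transfer _ _ _ _ _ _ _ id id (fun _ => erefl) (fun _ => erefl) (fun _ _ => erefl)
           (idpq_inj hp hq h1) (idpq_inj hp hq' h2)).
  move=> w hw; have := near_side hw.
  rewrite hvk /idpq => /(_ (or_introl (modnMr _ _))) h.
  have {}h := h ltac:(lia).
  by case: (vsbP w).
pose f p := O p (if p == 0 then 1 else 0) vk.
have fE : forall p q, p < 4 -> q < 4 -> p != q -> f p = O p q vk.
  move=> p q hp hq hpq; rewrite /f; apply: loc => //; case: (p =P 0) => h0; lia.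
have fneq : forall p q, p < 4 -> q < 4 -> p != q -> f p != f q.
  move=> p q hp hq hpq; rewrite (fE p q) // (fE q p) //; last by rewrite eq_sym.
  exact: neq.
exact: (four (fneq 0 1 erefl erefl erefl) (fneq 0 2 erefl erefl erefl)
  (fneq 0 3 erefl erefl erefl) (fneq 1 2 erefl erefl erefl)
  (fneq 1 3 erefl erefl erefl) (fneq 2 3 erefl erefl erefl)).
Qed.
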